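(* For every locally-dominated input $\mathit{in} \in \mathcal{T}$, there exists a subset $S \subseteq \mathcal{T}$ consisting only of inputs that are not locally dominated, such that $\mathit{in} \sqsubseteq S$.
   Context: $\mathcal{T}$ is a finite set of inputs. Each input $\mathit{in}$ covers a nonempty finite set $\mathrm{Obj}(\mathit{in})$ of objectives and has a cost $c(\mathit{in}) > 0$. For $S \subseteq \mathcal{T}$, $\mathrm{Obj}(S) = \bigcup_{\mathit{in} \in S} \mathrm{Obj}(\mathit{in})$ and $c(S) = \sum_{\mathit{in} \in S} c(\mathit{in})$. There are no duplicates: two distinct inputs of $\mathcal{T}$ never have both the same set of covered objectives and the same cost. Local dominance of an input by a subset: for $\mathit{in} \in \mathcal{T}$ and $S \subseteq \mathcal{T}$, $\mathit{in} \sqsubseteq S$ iff $\mathit{in} \notin S$, $\mathrm{Obj}(\mathit{in}) \subseteq \mathrm{Obj}(S)$ and $c(\mathit{in}) \ge c(S)$. An input $\mathit{in} \in \mathcal{T}$ is locally dominated iff there exists $S \subseteq \mathcal{T}$ with $\mathit{in} \sqsubseteq S$. *)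

(* Defs.v *)
From mathcomp Require Import all_boot all_order all_algebra.
Set Implicit Arguments. Unset Strict Implicit. Unset Printing Implicit Defensive.
Import Order.TTheory GRing.Theory Num.Theory.
Local Open Scope ring_scope.

Section Inputs.
Variables (R : realFieldType) (T O : finType).
Variables (Obj : T -> {set O}) (c : T -> R).

Definition ObjS (S : {set T}) : {set O} := \bigcup_(i in S) Obj i.
Definition costS (S : {set T}) : R := \sum_(i in S) c i.

Definition ldom (i : T) (S : {set T}) : Prop :=
  [/\ i \notin S, Obj i \subset ObjS S & costS S <= c i].

Definition locally_dominated (i : T) : Prop := exists S : {set T}, ldom i S.
End Inputs.

(* Main.v *)
Require Import Defs.
From mathcomp Require Import all_boot all_order all_algebra.
From mathcomp Require Import lra.
Import Order.TTheory GRing.Theory Num.Theory.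
Local Open Scope ring_scope.

Section Proof10.
Variables (R : realFieldType) (T O : finType).
Variables (Obj : T -> {set O}) (c : T -> R).
Hypothesis c_pos : forall i : T, 0 < c i.
Hypothesis no_dup : forall i j : T, Obj i = Obj j -> c i = c j -> i = j.

Lemma costS_ge0 (S : {set T}) : 0 <= costS c S.
Proof. by apply: sumr_ge0 => i _; apply: ltW. Qed.

Lemma costS_D1 {k} {S : {set T}} : k \in S -> costS c S = c k + costS c (S :\ k).
Proof. by move=> kS; rewrite /costS (big_setD1 k kS). Qed.

Lemma ObjS_D1 {k} {S : {set T}} : k \in S -> ObjS Obj S = Obj k :|: ObjS Obj (S :\ k).
Proof. by move=> kS; rewrite /ObjS (big_setD1 k kS). Qed.

Lemma costS_U (A B : {set T}) : costS c (A :|: B) <= costS c A + costS c B.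
Proof.
rewrite /costS (big_setID A) /= setUK setDUl setDv set0U lerD2l.
rewrite [X in _ <= X](big_setID A) /= lerDr.
by apply: sumr_ge0 => i _; apply: ltW.
Qed.

Lemma costS_eq0 (S : {set T}) : costS c S <= 0 -> S = set0.
Proof.
move=> H; apply/setP => k; rewrite inE; apply/negP => kS.
move: H; rewrite (costS_D1 kS) => H.
have := c_pos k; have := costS_ge0 (S :\ k); lra.
Qed.

Definition ltT k j :=
  (c k < c j) || ((c k == c j) && (#|Obj j| < #|Obj k|)%N).

Lemma ltT_irr j : ~~ ltT j j.
Proof. by rewrite /ltT ltxx eqxx ltnn. Qed.

Lemma ltT_trans k j l : ltT k j -> ltT j l -> ltT k l.
Proof.
rewrite /ltT => /orP [h1|/andP [/eqP e1 h1]] /orP [h2|/andP [/eqP e2 h2]].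
- by rewrite (lt_trans h1 h2).
- by rewrite -e2 h1.
- by rewrite e1 h2.
- by rewrite e1 e2 eqxx (ltn_trans h2 h1) orbT.
Qed.

Lemma domS_lt j (S : {set T}) k : ldom Obj c j S -> k \in S -> ltT k j.
Proof.
move=> [jS sub cle] kS.
have ck : c k <= c j.
  apply: le_trans cle; rewrite (costS_D1 kS) lerDl; exact: costS_ge0.
rewrite /ltT; move: ck; rewrite le_eqVlt => /orP [/eqP e|->] //.
rewrite e eqxx ltxx /=.
have Sk : S = [set k].
  have h0 : costS c (S :\ k) <= 0.
    move: cle; rewrite (costS_D1 kS) e -{2}(addr0 (c j)) lerD2l; exact.
  by rewrite -(setD1K kS) (costS_eq0 _ h0) setU0.
move: sub; rewrite Sk /ObjS big_set1 => sub.
have [le eq] := subset_leqif_cards sub.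
rewrite ltn_neqAle le andbT eq; apply/negP => /eqP E.
have := no_dup _ _ E (esym e) => jk; move: jS; by rewrite Sk jk set11.
Qed.

Definition dom_b j := [exists S : {set T},
  [&& j \notin S, Obj j \subset ObjS Obj S & costS c S <= c j]].

Lemma dom_bP j : reflect (locally_dominated Obj c j) (dom_b j).
Proof.
apply: (iffP existsP) => [[S /and3P [a b d]] | [S [a b d]]]; exists S.
  by split.
by apply/and3P; split.
Qed.

Definition Pj j := forall S : {set T}, (forall k, k \in S -> ltT k j) ->
  exists S' : {set T}, [/\ forall k, k \in S' -> ~~ dom_b k /\ ltT k j,
      ObjS Obj S \subset ObjS Obj S' & costS c S' <= costS c S].

Lemma inner j :
  (forall k, ltT k j -> dom_b k -> exists Tk : {set T},
     [/\ forall x, x \in Tk -> ~~ dom_b x /\ ltT x k,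
        Obj k \subset ObjS Obj Tk & costS c Tk <= c k]) -> Pj j.
Proof.
move=> H S.
move: {2}#|[set x in S | dom_b x]| (leqnn #|[set x in S | dom_b x]|) => n.
elim: n S => [|n IHn] S Hn HS;
  case: (pickP [pred x in S | dom_b x]) => [k /andP [kS dk] | none].
- have : k \in [set x in S | dom_b x] by rewrite inE kS dk.
  by move=> kD; move: Hn; rewrite leqn0 cards_eq0 => /eqP E; rewrite E inE in kD.
- exists S; split => //; move=> k kS; split; last exact: HS.
  by move: (none k); rewrite /= kS /= => ->.
- have [Tk [HT sub cle]] := H k (HS k kS) dk.
  set S1 := (S :\ k) :|: Tk.
  have [S' [H1 H2 H3]] : exists S' : {set T}, [/\ forall k, k \in S' -> ~~ dom_b k /\ ltT k j,
      ObjS Obj S1 \subset ObjS Obj S' & costS c S' <= costS c S1].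
    apply: IHn.
      have kD : k \in [set x in S | dom_b x] by rewrite inE kS dk.
      have sub1 : [set x in S1 | dom_b x] \subset [set x in S | dom_b x] :\ k.
        apply/subsetP => x; rewrite !inE => /andP [/orP [/andP [xk xS]|xT] dx].
          by rewrite xk xS dx.
        by move: (HT x xT) => [/negP].
      have := subset_leq_card sub1.
      move: Hn; rewrite (cardsD1 k) kD add1n ltnS => Hn h.
      exact: leq_trans h Hn.
    move=> x; rewrite !inE => /orP [/andP [_ xS]|xT]; first exact: HS.
    exact: ltT_trans (HT x xT).2 (HS k kS).
  exists S'; split => //.
    apply: subset_trans H2; rewrite (ObjS_D1 kS) /S1 /ObjS bigcup_setU setUC.
    by apply: setUS; exact: sub.
  apply: le_trans H3 _; apply: le_trans (costS_U _ _) _.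
  rewrite (costS_D1 kS); lra.
- exists S; split => //; move=> k kS; split; last exact: HS.
  by move: (none k); rewrite /= kS /= => ->.
Qed.

Lemma main m : forall j, (#|[set k | ltT k j]| <= m)%N -> Pj j.
Proof.
elim: m => [|m IHm] j Hj; apply: inner => k kj dk.
  have : k \in [set k | ltT k j] by rewrite inE.
  by move=> kD; move: Hj; rewrite leqn0 cards_eq0 => /eqP E; rewrite E inE in kD.
have [Sk ldk] := dom_bP k dk.
have Hk : (#|[set x | ltT x k]| <= m)%N.
  have pr : [set x | ltT x k] \proper [set x | ltT x j].
    apply/properP; split.
      by apply/subsetP => x; rewrite !inE => h; exact: ltT_trans h kj.
    by exists k; rewrite !inE // (negbTE (ltT_irr k)).
  by have := proper_card pr => h; rewrite -ltnS; exact: leq_trans h Hj.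
have [S' [H1 H2 H3]] := IHm k Hk Sk (fun x xS => domS_lt _ _ _ ldk xS).
case: ldk => _ sub cle.
exists S'; split => //; [exact: subset_trans sub H2 | exact: le_trans H3 cle].
Qed.

End Proof10.

Theorem mainTheorem10 (R : realFieldType) (T O : finType)
    (Obj : T -> {set O}) (c : T -> R)
    (Obj_nonempty : forall i : T, Obj i != set0)
    (c_pos : forall i : T, 0 < c i)
    (no_dup : forall i j : T, Obj i = Obj j -> c i = c j -> i = j) :
  forall i : T, locally_dominated Obj c i ->
    exists S : {set T},
      (forall j : T, j \in S -> ~ locally_dominated Obj c j) /\ ldom Obj c i S.
Proof.
move=> i [S ldi].
have [S' [H1 H2 H3]] := @main R T O Obj c c_pos no_dup #|[set k | @ltT R T O Obj c k i]| i (leqnn _) S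
  (fun x xS => @domS_lt R T O Obj c c_pos no_dup i S x ldi xS).
exists S'; split.
  by move=> j /H1 [/dom_bP].
case: ldi => _ sub cle; split.
- by apply/negP => /H1 [_]; rewrite (negbTE (@ltT_irr R T O Obj c i)).
- exact: subset_trans sub H2.
- exact: le_trans H3 cle.
Qed.
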